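(* Let $q\in X^*\setminus\{e\}$ and let $q_0$ be the shortest word in $P_q$. Then $$\sqrt[*]{P_q}=\bigl(P_q\setminus\{q_0\}^*\bigr)\cup\{q_0\}\subseteq\{q_0\}\cup\{v: v\sqsubseteq q\ \wedge\ |q_0|+|v|>|q|\}.$$
   Context: $X$ is a finite alphabet; $X^*$ the finite words (empty word $e$); $|w|$ is length; $w\sqsubseteq\eta$ means $w$ is a prefix of $\eta$, $w\sqsubset\eta$ a proper prefix. $P_q:=\{v: e\sqsubset v\sqsubseteq q\sqsubset v\cdot q\}$; $q_0$ is its shortest element. The star root of $P_q$ is $\sqrt[*]{P_q}:=P_q\setminus(P_q^2\cdot P_q^* )$, i.e. the elements of $P_q$ that are not a concatenation of two or more elements of $P_q$; here $L^*=\bigcup_{i\in\mathbb{N}}L^i$. *)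

(* Defs.v *)
From mathcomp Require Import all_boot.
Set Implicit Arguments. Unset Strict Implicit. Unset Printing Implicit Defensive.

Section Lang.
Variable X : finType.

Definition lang := seq X -> Prop.

Definition pprefix (u w : seq X) : Prop := prefix u w /\ u <> w.

Definition lsingle (v : seq X) : lang := fun w => w = v.

Definition lcat (L1 L2 : lang) : lang :=
  fun w => exists u v, [/\ w = u ++ v, L1 u & L2 v].

Fixpoint lpow (L : lang) (n : nat) : lang :=
  match n with
  | 0 => fun w => w = [::]
  | n'.+1 => lcat L (lpow L n')
  end.

Definition lstar (L : lang) : lang := fun w => exists n, lpow L n w.

Definition ldiff (L M : lang) : lang := fun w => L w /\ ~ M w.

Definition star_root (L : lang) : lang := ldiff L (lcat (lpow L 2) (lstar L)).

Definition Pq (q : seq X) : lang :=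
  fun v => [/\ pprefix [::] v, prefix v q & pprefix q (v ++ q)].

End Lang.

(* Main.v *)
Require Import Defs.
From mathcomp Require Import all_boot.
Set Implicit Arguments. Unset Strict Implicit. Unset Printing Implicit Defensive.

Section Aux.
Variables (X : finType) (x0 : X) (q : seq X).

Definition per p := forall j, j + p < size q -> nth x0 q (j + p) = nth x0 q j.

Lemma Pq_per v : Pq q v ->
  [/\ 0 < size v, size v <= size q, v = take (size v) q & per (size v)].
Proof.
case=> [[_ ne] pv [pq _]]; split.
- by rewrite lt0n size_eq0; apply/eqP => E; apply: ne; rewrite E.
- exact: size_prefix.
- by move: pv; rewrite prefixE => /eqP.
move=> j hj.
move: pq; rewrite prefixE => /eqP E.
rewrite -{1}E nth_take // nth_cat ltnNge leq_addl /= addnK //.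
Qed.

Lemma per_Pq p : 0 < p -> p <= size q -> per p -> Pq q (take p q).
Proof.
move=> p0 pq hp; split.
- split; first exact: prefix0s.
  by move=> E; move: (congr1 size E); rewrite size_takel //= => E'; rewrite -E' in p0.
- exact: prefix_take.
split.
- rewrite prefixE; apply/eqP; apply: (@eq_from_nth _ x0).
  + by rewrite size_takel // size_cat; apply: leq_addl.
  move=> i; rewrite size_takel ?size_cat ?leq_addl // => hi.
  rewrite nth_take // nth_cat size_takel //.
  case: ifP => hip; first by rewrite nth_take.
  have hpi : p <= i by rewrite leqNgt hip.
  by rewrite -(hp (i - p)) ?subnK.
- move=> E; move: (congr1 size E); rewrite size_cat size_takel // => E'.
  by move: E' => /eqP; rewrite -{1}[size q]add0n eqn_add2r => /eqP E0; rewrite -E0 in p0.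
Qed.

Lemma per_sub p r : per p -> per r -> p < r -> p + r <= size q -> per (r - p).
Proof.
move=> hp hr lpr hs j hj.
have hpr : p <= r by apply: ltnW.
case: (ltnP (j + r) (size q)) => h.
- have e : j + r = j + (r - p) + p by rewrite -addnA subnK.
  by rewrite -(hr j h) e hp // -e.
- have hjp : p <= j.
    by rewrite -(leq_add2r r); apply: leq_trans hs h.
  have e1 : j = (j - p) + p by rewrite subnK.
  have e2 : j + (r - p) = (j - p) + r by rewrite addnBA // addnBAC.
  have hjq : j < size q by apply: leq_ltn_trans hj; rewrite leq_addr.
  rewrite e2 hr; last by rewrite -e2.
  by rewrite {2}e1 hp // -e1.
Qed.

Lemma per0 : per 0.
Proof. by move=> j _; rewrite addn0. Qed.

Lemma per_mod p r : 0 < p -> per p -> per r -> p + r <= size q -> per (r %% p).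
Proof.
move=> p0 hp; elim/ltn_ind: r => r IH hr hs.
case: (ltngtP p r) => c.
- rewrite -(subnK (ltnW c)) modnDr; apply: IH.
  + by rewrite ltn_subrL p0 (ltn_trans p0 c).
  + exact: per_sub.
  + by apply: leq_trans hs; rewrite leq_add2l leq_subr.
- by rewrite modn_small.
- by rewrite c modnn; apply: per0.
Qed.

Lemma take_add p k : per p -> p + k <= size q -> take (p + k) q = take p q ++ take k q.
Proof.
move=> hp hs; apply: (@eq_from_nth _ x0).
- by rewrite size_cat !size_takel // (leq_trans _ hs) // ?leq_addl ?leq_addr.
move=> i; rewrite size_takel // => hi.
have hiq : i < size q by apply: leq_trans hs.
rewrite nth_take // nth_cat size_takel ?(leq_trans _ hs) ?leq_addr //.
case: ifP => hip; first by rewrite nth_take.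
have hpi : p <= i by rewrite leqNgt hip.
rewrite nth_take; last by rewrite ltn_subLR // addnC.
by rewrite -(hp (i - p)) ?subnK.
Qed.
End Aux.

Lemma lpow_cat (X : finType) (L : lang X) n m u v :
  lpow L n u -> lpow L m v -> lpow L (n + m) (u ++ v).
Proof.
elim: n u => [|n IH] u /=; first by move=> -> .
move=> [a [b [-> La Lb]]] Lv; exists a, (b ++ v); split => //.
- by rewrite catA.
- exact: IH.
Qed.

Lemma lpow_mono (X : finType) (L M : lang X) n w :
  (forall w, L w -> M w) -> lpow L n w -> lpow M n w.
Proof.
move=> LM; elim: n w => [|n IH] w //= [a [b [-> La Lb]]].
by exists a, b; split; [|apply: LM|apply: IH].
Qed.

Section Main.
Variables (X : finType) (x0 : X) (q q0 : seq X).
Hypothesis hq0 : Pq q q0.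
Hypothesis hmin : forall v, Pq q v -> size q0 <= size v.

Lemma take_pow m : m * size q0 <= size q -> lpow (lsingle q0) m (take (m * size q0) q).
Proof.
case: (Pq_per x0 hq0) => p0 pq e hp.
elim: m => [|m IH] hs; first by rewrite mul0n take0.
rewrite mulSn in hs *.
rewrite (take_add hp hs) -e; exists q0, (take (m * size q0) q); split => //.
by apply: IH; apply: leq_trans hs; rewrite leq_addl.
Qed.

Lemma lemA u : Pq q u -> size u + size q0 <= size q -> lstar (lsingle q0) u.
Proof.
move=> hu hs.
case: (Pq_per x0 hq0) => p0 pq e hp.
case: (Pq_per x0 hu) => u0 uq eu hpu.
have hm : per x0 q (size u %% size q0) by apply: per_mod => //; rewrite addnC.
have hmod : size u %% size q0 = 0.
  apply/eqP; rewrite -leqn0 leqNgt; apply/negP => pos.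
  have hle : size u %% size q0 <= size q by apply: leq_trans (leq_mod _ _) uq.
  have := hmin (per_Pq pos hle hm).
  by rewrite size_takel // leqNgt ltn_pmod.
set m := size u %/ size q0.
have E : size u = m * size q0 by rewrite {1}(divn_eq (size u) (size q0)) hmod addn0.
exists m; rewrite eu E; apply: take_pow; by rewrite -E.
Qed.

Lemma lemC n v : lpow (Pq q) n v -> size q0 + size v <= size q -> lstar (lsingle q0) v.
Proof.
elim: n v => [|n IH] v /=; first by move=> -> _; exists 0.
move=> [a [b [-> Pa Pb]]]; rewrite size_cat => hs.
case: (lemA Pa _) => [|k hk].
  by rewrite addnC; apply: leq_trans hs; rewrite leq_add2l leq_addr.
case: (IH b Pb _) => [|l hl].
  by apply: leq_trans hs; rewrite leq_add2l leq_addl.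
by exists (k + l); apply: lpow_cat.
Qed.

Lemma lemD w : lstar (lsingle q0) w -> w <> [::] -> w <> q0 ->
  lcat (lpow (Pq q) 2) (lstar (Pq q)) w.
Proof.
move=> [[|[|m]] /=].
- by move=> ->.
- by move=> [a [b [-> -> ->]]]; rewrite cats0.
move=> [a [b [-> -> [c [d [-> -> hd]]]]]] _ _.
exists (q0 ++ (q0 ++ [::])), d; split.
- by rewrite cats0 catA.
- by exists q0, (q0 ++ [::]); split => //; exists q0, [::].
- by exists m; apply: lpow_mono hd => w' Hw; rewrite /lsingle in Hw; rewrite Hw.
Qed.
End Main.

Theorem mainTheorem11 (X : finType) (q : seq X) (hq : q <> [::])
  (q0 : seq X) (hq0 : Pq q q0) (hmin : forall v, Pq q v -> size q0 <= size v) :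
  (forall w, star_root (Pq q) w <->
     (ldiff (Pq q) (lstar (lsingle q0)) w \/ lsingle q0 w)) /\
  (forall w, star_root (Pq q) w ->
     lsingle q0 w \/ (prefix w q /\ size q < size q0 + size w)).
Proof.
have [x0 _] : exists x0 : X, True by move: hq; case: (q) => [|x _] //; exists x.
case: (Pq_per x0 hq0) => p0 pq e hp.
have notq0 : ~ lcat (lpow (Pq q) 2) (lstar (Pq q)) q0.
  move=> [a [b [E [u1 [a' [Ea P1 [u2 [c [Ea' P2 Ec]]]]]] _]]].
  subst a a' c.
  move: (congr1 size E); rewrite !size_cat addn0 => E'.
  have h1 := hmin _ P1; have h2 := hmin _ P2.
  have : size q0 + size q0 <= size q0.
    by rewrite {3}E'; apply: leq_trans (leq_addr (size b) _); apply: leq_add.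
  by rewrite -{3}[size q0]add0n leq_add2r leqn0 => /eqP z; rewrite z in p0.
have K : forall w, Pq q w -> lcat (lpow (Pq q) 2) (lstar (Pq q)) w ->
    lstar (lsingle q0) w.
  move=> w Pw [a [y [E [u1 [a' [Ea P1 [u2 [c [Ea' P2 Ec]]]]]] [n hy]]]].
  subst a a' c.
  case: (Pq_per x0 Pw) => _ wq _ _.
  move: wq; rewrite E !size_cat addn0 => wq.
  have h1 := hmin _ P1; have h2 := hmin _ P2.
  have [k hk] : lstar (lsingle q0) u1.
    apply: (lemC x0 hq0 hmin (n := 1)).
    - by exists u1, [::]; split => //; rewrite cats0.
    - apply: leq_trans wq; rewrite addnC -addnA leq_add2l.
      by apply: leq_trans (leq_addr _ _).
  have [l hl] : lstar (lsingle q0) (u2 ++ y).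
    apply: (lemC x0 hq0 hmin (n := n.+1)).
    - by exists u2, y.
    - by apply: leq_trans wq; rewrite size_cat addnA leq_add2r leq_add2r.
  by exists (k + l); rewrite cats0 -catA; apply: lpow_cat.
split.
- move=> w; split.
  + case=> Pw nc; case: (eqVneq w q0) => [->|ne]; [by right|left].
    split => // st; apply: nc; apply: (lemD hq0) => //.
    * by move=> w0; case: (Pq_per x0 Pw); rewrite w0.
    * exact/eqP.
  + case=> [[Pw ns]|->]; last by split.
    by split => // c; apply: ns; apply: K.
- move=> w [Pw nc]; case: (eqVneq w q0) => [->|ne]; [by left|right].
  split; first by case: Pw.
  rewrite ltnNge; apply/negP => h; apply: nc; apply: (lemD hq0).
  + by apply: (lemA x0 hq0 hmin Pw); rewrite addnC.
  + by move=> w0; case: (Pq_per x0 Pw); rewrite w0.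
  + exact/eqP.
Qed.
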